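(* Let $(X,\phi)$ be a dynamical system with $X$ locally compact metrizable and $\phi$ a homeomorphism, let $\mathcal A = C_0(X)\times_\phi \mathbb Z_+$ be its semicrossed product, and let $(X_\gamma)_{\gamma\le\gamma_0}$ be the transfinite sequence of sets of iterated non-wandering points defined below. For each ordinal $\gamma\le\gamma_0$ let $$\mathcal I_\gamma = \{A\in\mathcal A : E_0(A)=0,\ E_n(A)(x)=0 \text{ for all } x\in X_\gamma \text{ and all integers } n\ge 1\}.$$ If $\gamma\le\gamma_0$ is a limit ordinal, then $\mathcal I_\gamma = \overline{\bigcup_{\beta<\gamma}\mathcal I_\beta}$ (closure in the norm of $\mathcal A$).
   Context: Semicrossed product: let $X$ be a locally compact metrizable space and $\phi:X\to X$ a homeomorphism; set $\alpha_n(f)=f\circ\phi^n$ for $f\in C_0(X)$, $n\in\mathbb Z_+$. On $\ell^1(\mathbb Z_+,C_0(X))$, whose elements are written as formal series $\sum_{n\ge0}U^nf_n$ with norm $\sum_n\|f_n\|_\infty$, define multiplication by $U^nf\,U^mg=U^{n+m}(\alpha_m(f)g)$ extended by linearity and continuity. Fix a faithful nondegenerate representation of $C_0(X)$ on a Hilbert space $\mathcal H_0$ and represent $\ell^1(\mathbb Z_+,C_0(X))$ on $\mathcal H_0\otimes\ell^2(\mathbb Z_+)$ by $\pi(U^nf)(\xi\otimes e_k)=\alpha_k(f)\xi\otimes e_{k+n}$. The semicrossed product $\mathcal A=C_0(X)\times_\phi\mathbb Z_+$ is the operator-norm closure of the image (independent of the choice of $\mathcal H_0$ up to isometric isomorphism).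 The Fourier coefficient maps $E_n(\sum_m U^mf_m)=f_n$ are contractive in the operator norm and extend to contractions $E_n:\mathcal A\to C_0(X)$; an element $A\in\mathcal A$ is $0$ iff $E_n(A)=0$ for all $n$. Iterated non-wandering sets: a set $Y\subseteq X$ is wandering if $\phi^m(Y)\cap\phi^n(Y)=\emptyset$ for all $m\ne n$ in $\mathbb Z_+$; a point is wandering if it has an open wandering neighbourhood, otherwise non-wandering. Let $X_1$ be the set of non-wandering points of $(X,\phi)$ and $\phi_1=\phi|_{X_1}$. Recursively, $X_{\gamma+1}$ is the set of non-wandering points of the system $(X_\gamma,\phi_\gamma)$ and $\phi_{\gamma+1}=\phi|_{X_{\gamma+1}}$; for a limit ordinal $\gamma$, $X_\gamma=\bigcap_{\beta<\gamma}X_\beta$ and $\phi_\gamma=\phi|_{X_\gamma}$. This process stabilizes at some ordinal $\gamma_0$. (Convention: $X_0 = X$.) *)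

(* Defs.v *)
From HB Require Import structures.
From mathcomp Require Import all_boot all_order all_algebra.
From mathcomp Require Import all_classical all_reals all_analysis.
From mathcomp Require Import complex.
Set Implicit Arguments. Unset Strict Implicit. Unset Printing Implicit Defensive.
Import Order.TTheory GRing.Theory Num.Theory.
Import numFieldTopology.Exports numFieldNormedType.Exports.
Local Open Scope classical_set_scope.
Local Open Scope ring_scope.

(* the usual (norm) topology on the complex numbers R[i] *)
HB.instance Definition _ (R : realType) :=
  PseudoPointedMetric.copy R[i] (R[i])^o.

Section Defs.
Variables (R : realType) (X : pseudoMetricType R).
Notation C := (R[i]).

Definition C0 (f : X -> C) : Prop :=
  continuous f /\
  (forall e : R, 0 < e -> exists K : set X, compact K /\
     forall x, ~ K x -> `|f x| < (e%:C)%C).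

Definition homeomorphism (phi : X -> X) : Prop :=
  exists psi : X -> X, cancel phi psi /\ cancel psi phi /\
    continuous phi /\ continuous psi.

(* An element of A is encoded by its sequence of Fourier coefficients
   (E_n(A))_n; a : nat -> X -> C with a n = E_n(A). *)
Definition coefs := nat -> X -> C.

(* finite sums  sum_n U^n f_n  with f_n in C_0(X) *)
Definition is_poly (p : coefs) : Prop :=
  (forall n, C0 (p n)) /\ exists N, forall n, (N <= n)%N -> p n = fun=> 0.

(* ||pi(a)|| <= c, where pi is the representation on l^2(X) (x) l^2(Z_+),
   C_0(X) acting on l^2(X) by multiplication (faithful, nondegenerate):
   pi(a)(delta_x (x) e_k) = sum_n a_n(phi^k x) delta_x (x) e_(k+n).
   The bound is tested on all finitely supported vectors xi (supported on
   the distinct points xs i, i < N, and on e_k, k < K), and on all finite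
   truncations (m < M) of the image vector. *)
Definition opnorm_le (phi : X -> X) (a : coefs) (c : R) : Prop :=
  forall (N K M : nat) (xs : 'I_N -> X) (xi : 'I_N -> nat -> C),
    injective xs ->
    \sum_(i < N) \sum_(m < M)
       `| \sum_(k < K | (k <= m)%N) a (m - k)%N (iter k phi (xs i)) * xi i k | ^+ 2
    <= ((c ^+ 2)%:C)%C * \sum_(i < N) \sum_(k < K) `| xi i k | ^+ 2.

(* membership in the semicrossed product C_0(X) x_phi Z_+ : norm limit of
   finite sums (the coefficients are then automatically in C_0(X)) *)
Definition in_scp (phi : X -> X) (a : coefs) : Prop :=
  (forall n, C0 (a n)) /\
  forall e : R, 0 < e -> exists p, is_poly p /\
     opnorm_le phi (fun n x => a n x - p n x) e.

Definition nonwandering (phi : X -> X) (Y : set X) : set X :=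
  [set y | Y y /\ forall U : set X, open U -> U y ->
     exists m n : nat, m <> n /\
       (iter m phi @` (U `&` Y) `&` iter n phi @` (U `&` Y)) !=set0].

Section Ordinals.
Variables (d : Order.disp_t) (O : orderType d).

(* O is a well-order: it stands for an initial segment of the ordinals *)
Definition well_ordered : Prop :=
  forall P : set O, P !=set0 -> exists m, P m /\ forall y, P y -> (m <= y)%O.

(* Xs is the transfinite sequence of iterated non-wandering sets, indexed
   by O (X_0 = X, X_(b+1) = nonwandering set of (X_b, phi_b), X_g =
   intersection of X_b, b < g, for limit g) *)
Definition iterated_nw (phi : X -> X) (Xs : O -> set X) : Prop :=
  (forall g : O, (forall b, ~ (b < g)%O) -> Xs g = setT) /\
  (forall b g : O, (b < g)%O -> (forall y, (b < y)%O -> (g <= y)%O) ->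
      Xs g = nonwandering phi (Xs b)) /\
  (forall g : O, (exists b, (b < g)%O) ->
      (forall b, (b < g)%O -> exists y, (b < y)%O /\ (y < g)%O) ->
      Xs g = \bigcap_(b in [set b | (b < g)%O]) Xs b).

Definition is_limit (g : O) : Prop :=
  (exists b, (b < g)%O) /\
  (forall b, (b < g)%O -> exists y, (b < y)%O /\ (y < g)%O).

(* g <= gamma_0 : the sequence has not stabilized strictly before g,
   i.e. X_(b+1) <> X_b for every b < g *)
Definition le_stab (Xs : O -> set X) (g : O) : Prop :=
  forall b c : O, (b < g)%O -> (b < c)%O ->
    (forall y, (b < y)%O -> (c <= y)%O) -> Xs c <> Xs b.

Definition Ideal (phi : X -> X) (Xs : O -> set X) (g : O) (a : coefs) : Prop :=
  in_scp phi a /\ a 0%N = (fun=> 0) /\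
  forall n : nat, (0 < n)%N -> forall x, Xs g x -> a n x = 0.

End Ordinals.
End Defs.

(* Main.v *)
Require Import Defs.
From HB Require Import structures.
From mathcomp Require Import all_boot all_order all_algebra.
From mathcomp Require Import all_classical all_reals all_analysis.
From mathcomp Require Import complex.
From mathcomp Require Import ring lra zify.
Import Order.TTheory GRing.Theory Num.Theory.
Import numFieldTopology.Exports numFieldNormedType.Exports.
Local Open Scope classical_set_scope.
Local Open Scope ring_scope.
Set Implicit Arguments. Unset Strict Implicit. Unset Printing Implicit Defensive.
Section Alg.
Variable R : realType.

Definition nsq (z : R[i]) : R := complex.Re z ^+ 2 + complex.Im z ^+ 2.

Lemma normsq (z : R[i]) : `|z| ^+ 2 = ((nsq z)%:C)%C.
Proof. by rewrite -add_Re2_Im2. Qed.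

Lemma nsq_ge0 z : 0 <= nsq z.
Proof. rewrite /nsq; nra. Qed.

Lemma nsqM x y : nsq (x * y) = nsq x * nsq y.
Proof. case: x => a b; case: y => c d; rewrite /nsq /=; ring. Qed.

Lemma nsqC (k : R) : nsq ((k%:C)%C) = k ^+ 2.
Proof. rewrite /nsq /=; ring. Qed.

Lemma nsqN x : nsq (- x) = nsq x.
Proof. case: x => a b; rewrite /nsq /=; ring. Qed.

Lemma nsq0 : nsq 0 = 0.
Proof. rewrite /nsq /=; ring. Qed.

Lemma nsqD_le (t : R) x y : 0 < t ->
  nsq (x + y) <= (1 + t) * nsq x + (1 + t^-1) * nsq y.
Proof.
move=> t0; case: x => a b; case: y => c d; rewrite /nsq /=.
have ti : t * t^-1 = 1 by rewrite divff // gt_eqF.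
have ti0 : 0 < t^-1 by rewrite invr_gt0.
set u := t^-1 in ti ti0 *.
have e1 : u*(t*a-c)^+2 = (t*u)*t*a^+2 - 2*(t*u)*a*c + u*c^+2 by ring.
have e2 : u*(t*b-d)^+2 = (t*u)*t*b^+2 - 2*(t*u)*b*d + u*d^+2 by ring.
rewrite ti !mul1r in e1 e2.
have h1 : 0 <= u*(t*a-c)^+2 by rewrite mulr_ge0 ?sqr_ge0 ?ltW.
have h2 : 0 <= u*(t*b-d)^+2 by rewrite mulr_ge0 ?sqr_ge0 ?ltW.
nra.
Qed.

Lemma nsq_sum_le (I : Type) (s : seq I) (f : I -> R[i]) :
  nsq (\sum_(x <- s) f x) <= (size s)%:R * \sum_(x <- s) nsq (f x).
Proof.
elim: s => [|x s IH]; first by rewrite !big_nil nsq0 mul0r.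
rewrite !big_cons /=.
case: s IH => [|y s] IH.
  by rewrite !big_nil !addr0 mul1r lexx.
set S := \sum_(j <- y :: s) f j in IH *.
set T := \sum_(j <- y :: s) nsq (f j) in IH *.
set n := size (y :: s) in IH *.
have n0 : (0 < n%:R :> R) by rewrite ltr0n.
have h := @nsqD_le (n%:R^-1) S (f x) (ltac:(by rewrite invr_gt0)).
rewrite invrK in h; rewrite addrC.
apply: (le_trans h).
have hx := nsq_ge0 (f x).
have hT : (1 + n%:R^-1) * nsq S <= (1 + n%:R^-1) * (n%:R * T).
  by rewrite ler_wpM2l // addr_ge0 // invr_ge0 ltW.
have e : (1 + n%:R^-1) * (n%:R * T) = (1 + n%:R) * T.
  rewrite mulrDl mul1r mulrA mulVf ?gt_eqF // mul1r; ring.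
rewrite e in hT.
have -> : (size (y :: s)).+1%:R = (1 + n%:R :> R) by rewrite -addn1 natrD addrC.
apply: le_trans (lerD hT (lexx ((1 + n%:R) * nsq (f x)))) _.
rewrite [X in _ <= X]mulrDr [X in _ <= X]addrC; exact: lexx.
Qed.

Lemma nsq_sum_filter_le (I : eqType) (s t : seq I) (P : pred I) (f : I -> R[i]) :
  uniq s -> {subset seq.filter P s <= t} ->
  nsq (\sum_(x <- s | P x) f x) <= (size t)%:R * \sum_(x <- s | P x) nsq (f x).
Proof.
move=> us sub.
rewrite -[\sum_(x <- s | P x) f x]big_filter -[\sum_(x <- s | P x) nsq (f x)]big_filter.
apply: le_trans (nsq_sum_le _ _) _.
apply: ler_wpM2r; first by apply: sumr_ge0 => ? _; exact: nsq_ge0.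
rewrite ler_nat; apply: uniq_leq_size => //; exact: filter_uniq.
Qed.
End Alg.

Section Op.
Variables (R : realType) (X : pseudoMetricType R) (phi : X -> X).

Definition inner (a : coefs X) (K m : nat) (x : X) (xi : nat -> R[i]) :=
  \sum_(k < K | (k <= m)%N) a (m - k)%N (iter k phi x) * xi k.

Definition opR (a : coefs X) (c : R) := forall N K M (xs : 'I_N -> X)
  (xi : 'I_N -> nat -> R[i]), injective xs ->
  \sum_(i < N) \sum_(m < M) nsq (inner a K m (xs i) (xi i))
  <= c ^+ 2 * \sum_(i < N) \sum_(k < K) nsq (xi i k).

Lemma sum2C N M (F : 'I_N -> 'I_M -> R) :
  \sum_(i < N) \sum_(m < M) ((F i m)%:C)%C = ((\sum_(i < N) \sum_(m < M) F i m)%:C)%C.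
Proof.
rewrite rmorph_sum; apply: eq_bigr => i _; by rewrite rmorph_sum.
Qed.

Lemma opRP a c : opnorm_le phi a c <-> opR a c.
Proof.
rewrite /opnorm_le /opR.
have E : forall N K M (xs : 'I_N -> X) (xi : 'I_N -> nat -> R[i]),
   (\sum_(i < N) \sum_(m < M)
       `| \sum_(k < K | (k <= m)%N) a (m - k)%N (iter k phi (xs i)) * xi i k | ^+ 2
    <= ((c ^+ 2)%:C)%C * \sum_(i < N) \sum_(k < K) `| xi i k | ^+ 2) =
   (\sum_(i < N) \sum_(m < M) nsq (inner a K m (xs i) (xi i))
  <= c ^+ 2 * \sum_(i < N) \sum_(k < K) nsq (xi i k)).
  move=> N K M xs xi.
  under eq_bigr do under eq_bigr do rewrite normsq.
  under [X in _ <= _ * X]eq_bigr do under eq_bigr do rewrite normsq.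
  by rewrite !sum2C -rmorphM lecR.
split=> H N K M xs xi inj; have := H N K M xs xi inj; by rewrite E.
Qed.
End Op.

Lemma sum_const_filter_le (R : realType) (I : eqType) (s t : seq I) (P : pred I) (c : R) :
  uniq s -> {subset seq.filter P s <= t} -> 0 <= c ->
  \sum_(x <- s | P x) c <= (size t)%:R * c.
Proof.
move=> us sub c0.
rewrite -[\sum_(x <- s | P x) c]big_filter.
have -> : forall s' : seq I, \sum_(x <- s') c = (size s')%:R * c.
  elim=> [|y s' IH]; first by rewrite big_nil mul0r.
  by rewrite big_cons IH /= -addn1 natrD mulrDl mul1r addrC.
apply: ler_wpM2r => //; rewrite ler_nat; apply: uniq_leq_size => //.
exact: filter_uniq.
Qed.

Lemma eqle (R : realType) (x y : R) : x = y -> x <= y.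
Proof. by move=> ->. Qed.

Section Op2.
Variables (R : realType) (X : pseudoMetricType R) (phi : X -> X).
Notation opR := (@opR R X phi).
Notation inner := (@inner R X phi).

Lemma opR_ext (a b : coefs X) c : (forall n x, a n x = b n x) -> opR a c -> opR b c.
Proof.
move=> e; have -> : a = b by apply/funext => n; apply/funext => x; exact: e.
by [].
Qed.

Lemma sum2_ge0 N K (F : 'I_N -> 'I_K -> R) : (forall i k, 0 <= F i k) ->
  0 <= \sum_(i < N) \sum_(k < K) F i k.
Proof. by move=> h; apply: sumr_ge0 => i _; apply: sumr_ge0 => k _; exact: h. Qed.

Lemma opR_zero (a : coefs X) c : (forall n x, a n x = 0) -> opR a c.
Proof.
move=> a0 N K M xs xi _.
have -> : \sum_(i < N) \sum_(m < M) nsq (inner a K m (xs i) (xi i)) = 0.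
  apply: big1 => i _; apply: big1 => m _.
  rewrite /inner big1 ?nsq0 // => k _; by rewrite a0 mul0r.
apply: mulr_ge0; first exact: sqr_ge0.
apply: sum2_ge0 => i k; exact: nsq_ge0.
Qed.

Lemma opR_mono (a : coefs X) c c' : 0 <= c -> c <= c' -> opR a c -> opR a c'.
Proof.
move=> c0 cc H N K M xs xi inj; apply: le_trans (H N K M xs xi inj) _.
apply: ler_wpM2r; first by apply: sum2_ge0 => i k; exact: nsq_ge0.
by rewrite ler_pXn2r // ?nnegrE // (le_trans c0).
Qed.

Lemma opR_contr (a : coefs X) e n x : opR a e -> nsq (a n x) <= e ^+ 2.
Proof.
move=> H.
have := H 1%N 1%N n.+1 (fun=> x) (fun _ k => if k == 0%N then 1 else 0)
  (ltac:(by move=> i j _; rewrite (ord1 i) (ord1 j))).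
rewrite !big_ord1 /= nsqC expr1n mulr1.
under eq_bigr => m _ do rewrite /inner big_mkcond big_ord1 /= subn0 mulr1.
rewrite big_ord_recr /=; apply: le_trans.
rewrite lerDr; apply: sumr_ge0 => ? _; exact: nsq_ge0.
Qed.

Lemma opR_neg (a : coefs X) c : opR a c -> opR (fun n x => - a n x) c.
Proof.
move=> H N K M xs xi inj; apply: le_trans _ (H N K M xs xi inj).
apply/eqle; apply: eq_bigr => i _; apply: eq_bigr => m _.
have -> : inner (fun n x => - a n x) K m (xs i) (xi i) = - inner a K m (xs i) (xi i).
  by rewrite /inner -sumrN; apply: eq_bigr => k _; rewrite mulNr.
by rewrite nsqN.
Qed.

Lemma opR_add (a b : coefs X) c1 c2 : 0 < c1 -> 0 < c2 -> opR a c1 -> opR b c2 ->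
  opR (fun n x => a n x + b n x) (c1 + c2).
Proof.
move=> c10 c20 Ha Hb N K M xs xi inj.
have := Ha N K M xs xi inj; have := Hb N K M xs xi inj.
set A := \sum_(i < N) \sum_(m < M) nsq (inner a K m (xs i) (xi i)).
set B := \sum_(i < N) \sum_(m < M) nsq (inner b K m (xs i) (xi i)).
set S := \sum_(i < N) \sum_(k < K) nsq (xi i k).
move=> hB hA.
set t := c2 / c1.
have t0 : 0 < t by rewrite divr_gt0.
have step : \sum_(i < N) \sum_(m < M)
     nsq (inner (fun n x => a n x + b n x) K m (xs i) (xi i))
   <= (1 + t) * A + (1 + t^-1) * B.
  rewrite /A /B !mulr_sumr -big_split /=; apply: ler_sum => i _.
  rewrite !mulr_sumr -big_split /=; apply: ler_sum => m _.
  have -> : inner (fun n x => a n x + b n x) K m (xs i) (xi i) =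
     inner a K m (xs i) (xi i) + inner b K m (xs i) (xi i).
    by rewrite /inner -big_split; apply: eq_bigr => k _; rewrite mulrDl.
  exact: nsqD_le.
apply: le_trans step _.
have S0 : 0 <= S by apply: sum2_ge0 => i k; exact: nsq_ge0.
have t1 : 0 <= 1 + t by rewrite addr_ge0 // ltW.
have t2 : 0 <= 1 + t^-1 by rewrite addr_ge0 // invr_ge0 ltW.
apply: le_trans (lerD (ler_wpM2l t1 hA) (ler_wpM2l t2 hB)) _.
apply/eqle; rewrite /t invf_div; field.
by rewrite gt_eqF //; rewrite gt_eqF.
Qed.
End Op2.

Section Op3.
Variables (R : realType) (X : pseudoMetricType R) (phi : X -> X).
Notation opR := (@opR R X phi).
Notation inner := (@inner R X phi).

Lemma opR_mono1 (q : coefs X) n B : 0 <= B ->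
  (forall n' x, n' != n -> q n' x = 0) -> (forall x, nsq (q n x) <= B ^+ 2) ->
  opR q B.
Proof.
move=> B0 qz qb N K M xs xi inj.
rewrite mulr_sumr; apply: ler_sum => i _.
set x := xs i; set f := xi i.
have h1 : forall m : nat, nsq (inner q K m x f) <=
    \sum_(0 <= k < K | (k <= m)%N && (m - k == n)%N) B ^+ 2 * nsq (f k).
  move=> m; rewrite /inner -(big_mkord (fun k => (k <= m)%N)
     (fun k => q (m - k)%N (iter k phi x) * f k)) (bigID (fun k => (m - k == n)%N)) /=.
  rewrite [X in _ + X]big1 ?addr0; last first.
    by move=> k /andP [_ hk]; rewrite qz ?mul0r.
  have := @nsq_sum_filter_le R nat (index_iota 0 K) [:: (m-n)%N]
     (fun k => (k <= m)%N && (m - k == n)%N) (fun k => q (m-k)%N (iter k phi x) * f k).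
  move=> hh; apply: le_trans (hh _ _) _.
  - by rewrite /index_iota iota_uniq.
  - move=> k; rewrite mem_filter => /andP [/andP [km /eqP e] _].
    rewrite inE; apply/eqP; lia.
  rewrite /= mul1r; apply: ler_sum => k /andP [_ /eqP e].
  by rewrite nsqM e ler_wpM2r ?nsq_ge0 //.
have h2 : \sum_(m < M) nsq (inner q K m x f) <=
   \sum_(m < M) \sum_(0 <= k < K | (k <= m)%N && (m - k == n)%N) B ^+ 2 * nsq (f k).
  by apply: ler_sum => m _; exact: h1.
apply: le_trans h2 _.
rewrite -(big_mkord xpredT (fun m => \sum_(0 <= k < K | (k <= m)%N && (m - k == n)%N)
   B ^+ 2 * nsq (f k))).
under eq_bigr => m _ do rewrite big_mkcond /=.
rewrite exchange_big /=.
rewrite -(big_mkord xpredT (fun k => nsq (f k))) mulr_sumr.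
apply: ler_sum => k _.
rewrite -big_mkcond /=.
apply: le_trans (sum_const_filter_le (t := [:: (k + n)%N]) _ _ _) _.
- by rewrite /index_iota iota_uniq.
- move=> m; rewrite mem_filter => /andP [/andP [km /eqP e] _].
  rewrite inE; apply/eqP; lia.
- by rewrite mulr_ge0 ?sqr_ge0 ?nsq_ge0.
by rewrite /= mul1r.
Qed.

Lemma opR_poly (L : nat) (B : nat -> R) (q : coefs X) : (forall n, 0 < B n) ->
  (forall n x, (L < n)%N -> q n x = 0) -> (forall n x, nsq (q n x) <= B n ^+ 2) ->
  opR q (\sum_(n < L.+1) B n).
Proof.
move=> Bp; elim: L q => [|L IH] q qz qb.
  rewrite big_ord1; apply: (opR_mono1 (n := 0%N)) => //; first exact: ltW.
  by move=> n' x; rewrite -lt0n => /qz ->.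
pose q1 : coefs X := fun n x => if (n <= L)%N then q n x else 0.
pose q2 : coefs X := fun n x => if (n == L.+1)%N then q n x else 0.
apply: (opR_ext (a := fun n x => q1 n x + q2 n x)).
  move=> n x; rewrite /q1 /q2.
  case: (ltngtP n L.+1) => h.
  - by rewrite ltnS in h; rewrite h addr0.
  - by rewrite qz // addr0; case: ifP => // /(leq_trans h); rewrite ltnn.
  - by rewrite h ltnn /= add0r.
rewrite big_ord_recr /=.
have s0 : 0 < \sum_(n < L.+1) B n.
  by rewrite big_ord_recr /=; apply: ltr_wpDl (sumr_ge0 _ _) (Bp _) => ? _; exact: ltW.
apply: opR_add => //.
  apply: IH => n x.
    by rewrite /q1 => h; rewrite leqNgt h.
  rewrite /q1; case: ifP => _ //; rewrite nsq0; exact: sqr_ge0.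
apply: (opR_mono1 (n := L.+1)); first exact: ltW.
  by move=> n' x; rewrite /q2 => /negbTE ->.
by move=> x; rewrite /q2 eqxx.
Qed.
End Op3.

Lemma win_count (J L k m : nat) : (k <= m)%N -> (k + L <= J)%N ->
  \sum_(0 <= j < J | (m <= j < m + L)%N) ((k <= j < k + L)%N : nat) = (L - (m - k))%N.
Proof.
move=> km kJ; rewrite big_mkcond /=.
have pw : forall j, (if (m <= j < m + L)%N then nat_of_bool (k <= j < k + L)%N else 0%N)
    = nat_of_bool ((m <= j) && (j < k + L))%N.
  move=> j; have [h1|h1] := leqP m j; have [h2|h2] := ltnP j (m + L);
  have [h3|h3] := leqP k j; have [h4|h4] := ltnP j (k + L) => //=; lia.
under eq_bigr do rewrite pw.
have gen : forall J', \sum_(0 <= j < J') nat_of_bool ((m <= j) && (j < k + L))%N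
     = (minn J' (k + L) - m)%N.
  elim=> [|J' IH]; first by rewrite big_geq //; lia.
  rewrite big_nat_recr //= IH.
  have [h1|h1] := leqP m J'; have [h2|h2] := ltnP J' (k + L) => /=; lia.
rewrite gen; lia.
Qed.

Lemma sum_if_const (R : realType) (s : seq nat) (P c : pred nat) (z : R[i]) :
  \sum_(j <- s | P j) (if c j then z else 0) = z *+ (\sum_(j <- s | P j) (c j : nat)).
Proof.
elim: s => [|j s IH]; first by rewrite !big_nil.
rewrite !big_cons; case: ifP => // _; rewrite IH.
by case: (c j); rewrite /= ?add0r ?add0n ?add1n ?mulrS.
Qed.

Section Fejer.
Variables (R : realType) (X : pseudoMetricType R) (phi : X -> X).
Notation opR := (@opR R X phi).
Notation inner := (@inner R X phi).

Definition lam (L n : nat) : R := ((L - n)%N)%:R / L%:R.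

Lemma opR_fejer (a : coefs X) c L : (0 < L)%N -> opR a c ->
  opR (fun n x => ((lam L n)%:C)%C * a n x) c.
Proof.
move=> L0 H N K M xs xi inj.
set J := (K + L)%N.
pose xj (j : nat) (i : 'I_N) (k : nat) := if (k <= j < k + L)%N then xi i k else 0.
pose S (j : nat) (i : 'I_N) (m : nat) := inner a K m (xs i) (xj j i).
have Lr : (0 < L%:R :> R) by rewrite ltr0n.
have ident : forall i (m : nat),
   inner (fun n x => ((lam L n)%:C)%C * a n x) K m (xs i) (xi i) =
   (((L%:R)^-1)%:C)%C * \sum_(0 <= j < J | (m <= j < m + L)%N) S j i m.
  move=> i m; rewrite /S /inner exchange_big /= mulr_sumr.
  apply: eq_bigr => k km.
  under eq_bigr => j _ do rewrite /xj (fun_if (fun z => a (m - k)%N (iter k phi (xs i)) * z)) mulr0.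
  rewrite sum_if_const win_count //; last by rewrite /J leq_add2r ltnW.
  have hn : forall n : nat, ((n%:R : R)%:C)%C = (n%:R : R[i]).
    elim=> [|n IH] //; rewrite -addn1 !natrD -IH.
    by apply/eqP; rewrite eq_complex /= addr0 !eqxx.
  have -> : forall z : R[i], (((L%:R)^-1)%:C)%C * (z *+ (L - (m - k))) =
      ((L - (m - k))%:R : R[i]) * (((L%:R)^-1)%:C)%C * z.
    by move=> z; rewrite -mulr_natl; ring.
  by rewrite /lam rmorphM /= hn; ring.
have step1 : forall i (m : nat),
    nsq (inner (fun n x => ((lam L n)%:C)%C * a n x) K m (xs i) (xi i)) <=
    L%:R^-1 * \sum_(0 <= j < J) nsq (S j i m).
  move=> i m; rewrite ident nsqM nsqC.
  have cs := @nsq_sum_filter_le R nat (index_iota 0 J) (iota m L)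
     (fun j => (m <= j < m + L)%N) (fun j => S j i m).
  have := cs (iota_uniq _ _) (ltac:(by move=> j; rewrite mem_filter => /andP [hh _]; rewrite mem_iota; exact: hh)).
  rewrite size_iota => h.
  have h' : \sum_(0 <= j < J | (m <= j < m + L)%N) nsq (S j i m) <=
            \sum_(0 <= j < J) nsq (S j i m).
    rewrite [X in _ <= X](bigID (fun j => (m <= j < m + L)%N)) /= lerDl.
    by apply: sumr_ge0 => j _; exact: nsq_ge0.
  have L2 : 0 <= L%:R^-1 ^+ 2 :> R by exact: sqr_ge0.
  apply: le_trans (ler_wpM2l L2 h) _.
  have sim : forall A : R, L%:R^-1 ^+ 2 * (L%:R * A) = L%:R^-1 * A.
    by move=> A; field; rewrite gt_eqF.
  rewrite sim.
  by apply: ler_wpM2l h'; rewrite invr_ge0 ltW.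
have step5 : forall i k, \sum_(0 <= j < J) nsq (xj j i k) <= L%:R * nsq (xi i k).
  move=> i k.
  rewrite (bigID (fun j => (k <= j < k + L)%N)) /=.
  rewrite [X in _ + X]big1 ?addr0; last by move=> j /negbTE hj; rewrite /xj hj nsq0.
  rewrite (eq_bigr (fun _ => nsq (xi i k))); last by move=> j hj; rewrite /xj hj.
  have := @sum_const_filter_le R nat (index_iota 0 J) (iota k L)
     (fun j => (k <= j < k + L)%N) (nsq (xi i k)) (iota_uniq _ _)
     (ltac:(by move=> j; rewrite mem_filter => /andP [hh _]; rewrite mem_iota; exact: hh)) (nsq_ge0 _).
  by rewrite size_iota.
have e2 : \sum_(i < N) \sum_(m < M) \sum_(0 <= j < J) nsq (S j i m) =
          \sum_(0 <= j < J) \sum_(i < N) \sum_(m < M) nsq (S j i m).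
  rewrite [RHS]exchange_big /=; apply: eq_bigr => i _; by rewrite [RHS]exchange_big.
have e4 : \sum_(0 <= j < J) \sum_(i < N) \sum_(k < K) nsq (xj j i k) =
          \sum_(i < N) \sum_(k < K) \sum_(0 <= j < J) nsq (xj j i k).
  rewrite [LHS]exchange_big /=; apply: eq_bigr => i _; by rewrite [LHS]exchange_big.
have step3 : \sum_(0 <= j < J) \sum_(i < N) \sum_(m < M) nsq (S j i m) <=
          c ^+ 2 * \sum_(i < N) \sum_(k < K) \sum_(0 <= j < J) nsq (xj j i k).
  rewrite -e4 mulr_sumr; apply: ler_sum => j _; exact: H.
have step2 : \sum_(i < N) \sum_(m < M)
    nsq (inner (fun n x => ((lam L n)%:C)%C * a n x) K m (xs i) (xi i)) <=
    L%:R^-1 * \sum_(i < N) \sum_(m < M) \sum_(0 <= j < J) nsq (S j i m).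
  rewrite mulr_sumr; apply: ler_sum => i _; rewrite mulr_sumr; apply: ler_sum => m _.
  exact: step1.
apply: le_trans step2 _; rewrite e2.
have Li : 0 <= L%:R^-1 :> R by rewrite invr_ge0 ltW.
apply: le_trans (ler_wpM2l Li step3) _.
have c2 : 0 <= c ^+ 2 by exact: sqr_ge0.
have step6 : \sum_(i < N) \sum_(k < K) \sum_(0 <= j < J) nsq (xj j i k) <=
     L%:R * \sum_(i < N) \sum_(k < K) nsq (xi i k).
  rewrite mulr_sumr; apply: ler_sum => i _; rewrite mulr_sumr; apply: ler_sum => k _.
  exact: step5.
apply: le_trans (ler_wpM2l Li (ler_wpM2l c2 step6)) _.
apply/eqle.
have sim : forall A c' : R, L%:R^-1 * (c' * (L%:R * A)) = c' * A.
  by move=> A c'; field; rewrite gt_eqF.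
by rewrite sim.
Qed.
End Fejer.

Section Topo.
Variable R : realType.

Lemma Re_cont : continuous (fun z : R[i] => complex.Re z).
Proof.
move=> z; apply/(cvgrPdist_lt (FF := nbhs_filter z)) => e e0.
apply/nbhs_ballP; exists ((e%:C)%C); first by rewrite /= ltcR.
move=> t; rewrite /ball /=.
case: z => a b; case: t => c d.
rewrite normc_def ltcR /= => h.
apply: le_lt_trans h; rewrite -sqrtr_sqr; apply: ler_wsqrtr.
by rewrite lerDl sqr_ge0.
Qed.





Lemma RC_cont0 : continuous (fun k : R => (k%:C)%C : R[i]^o).
Proof.
move=> k; apply/(cvgrPdist_lt (FF := nbhs_filter k)) => e e0.
move: e0; case: e => r s; rewrite ltcE /= => /andP [/eqP s0 r0].
apply/nbhs_ballP; exists r => // t; rewrite /ball /= => h.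
subst s.
rewrite normc_def ltcE /=; apply/andP; split => //.
rewrite subrr expr0n /= addr0 sqrtr_sqr //.
Qed.

Lemma RC_cont : continuous (fun k : R => (k%:C)%C : R[i]).
Proof. exact: RC_cont0. Qed.

Lemma absRe (z : R[i]) : `|z| = ((complex.Re `|z|)%:C)%C.
Proof. by rewrite normc_def. Qed.

Lemma Reabs_ge0 (z : R[i]) : 0 <= complex.Re `|z|.
Proof. by rewrite normc_def /= sqrtr_ge0. Qed.

Lemma nsq_Re (z : R[i]) : nsq z = (complex.Re `|z|) ^+ 2.
Proof. by rewrite normc_def /= sqr_sqrtr // addr_ge0 ?sqr_ge0. Qed.

Lemma normC_cont : continuous (fun z : R[i] => `|z|).
Proof. exact: (@norm_continuous _ (R[i]^o)). Qed.

Variable X : pseudoMetricType R.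

Lemma gnorm_cont (f : X -> R[i]) : continuous f ->
  continuous (fun x => complex.Re `|f x|).
Proof.
move=> fc x.
apply: (continuous_comp (f := fun x => `|f x|) (g := fun z => complex.Re z)).
  apply: (continuous_comp (f := f) (g := fun z => `|z|)); first exact: fc.
  exact: normC_cont.
exact: Re_cont.
Qed.

Lemma C0_bounded (f : X -> R[i]) : C0 f -> exists B, 0 < B /\ forall x, nsq (f x) <= B ^+ 2.
Proof.
move=> [fc hv]; have [K [cK hK]] := hv 1 ltr01.
set g := fun x => complex.Re `|f x|.
have gc : continuous g := gnorm_cont fc.
have cgK : compact (g @` K).
  apply: continuous_compact => //; exact: continuous_subspaceT.
case: (compact_bounded (V := R^o) cgK) => M0 [_ hM0].
have hM := hM0 (M0 + 1) (ltac:(by rewrite ltrDl)).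
set M := M0 + 1 in hM.
exists (Num.max M 1 + 1); split.
  by apply: ltr_wpDl; [rewrite le_max ler01 orbT | exact: ltr01].
move=> x; rewrite nsq_Re.
have gx0 : 0 <= g x := Reabs_ge0 _.
have gxB : g x <= Num.max M 1 + 1.
  case: (pselect (K x)) => Kx.
    have := hM (g x) (ltac:(by exists x)); rewrite /= ger0_norm // => h.
    have hmx : M <= Num.max M 1 by rewrite le_max lexx.
    apply: le_trans h _; apply: le_trans hmx _; by rewrite lerDl.
  have := hK x Kx; rewrite absRe ltcR => /ltW h.
  have hmx : 1 <= Num.max M 1 by rewrite le_max lexx orbT.
  apply: le_trans h _; apply: le_trans hmx _; by rewrite lerDl.
rewrite -/(g x); nra.
Qed.

End Topo.

Section Approx.
Variables (R : realType) (X : pseudoMetricType R) (phi : X -> X).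

Lemma one_lam (L n : nat) : (0 < L)%N -> (n <= L)%N -> 1 - lam R L n = n%:R / L%:R.
Proof.
move=> L0 nL; rewrite /lam natrB //; field.
by rewrite pnatr_eq0 -lt0n.
Qed.

Lemma fejer_approx (a : coefs X) E : 0 < E -> in_scp phi a ->
  exists L, (0 < L)%N /\ opR phi (fun n x => a n x - ((lam R L n)%:C)%C * a n x) E.
Proof.
move=> E0 [aC ha].
have E3 : 0 < E / 3 by rewrite divr_gt0.
have [p [[pC [Np hNp]] /opRP hp]] := ha (E / 3) E3.
have [B hB] := choice (fun n => C0_bounded (pC n)).
set SB := \sum_(n < Np.+1) B n.
have SB0 : 0 <= SB by apply: sumr_ge0 => n _; exact: ltW (proj1 (hB n)).
set L := ((Num.truncn (6 * Np%:R * SB / E)).+1 + Np)%N.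
have L0 : (0 < L)%N by rewrite /L addSn.
have LNp : (Np <= L)%N by rewrite /L leq_addl.
have Lr : 0 < L%:R :> R by rewrite ltr0n.
have Lbig : 6 * Np%:R * SB / E < L%:R.
  apply: lt_le_trans (truncnS_gt _) _; rewrite ler_nat /L leq_addr //.
set eta := E / (6 * (Np.+1)%:R).
have eta0 : 0 < eta by rewrite divr_gt0 // mulr_gt0 // ltr0n.
set B' := fun n => Np%:R / L%:R * B n + eta.
have B'0 : forall n, 0 < B' n.
  move=> n; rewrite /B'; apply: ltr_wpDl => //.
  by rewrite mulr_ge0 ?divr_ge0 ?ler0n ?ltW //; case: (hB n).
have h3 : opR phi (fun n x => p n x - ((lam R L n)%:C)%C * p n x) (\sum_(n < Np.+1) B' n).
  apply: opR_poly => //.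
    move=> n x hn; have hn' : (Np <= n)%N by exact: ltnW.
    by rewrite hNp //= mulr0 subr0.
  move=> n x.
  have -> : p n x - ((lam R L n)%:C)%C * p n x = (((1 - lam R L n)%:C)%C) * p n x.
    by rewrite rmorphB /= rmorph1; ring.
  case: (ltnP n Np) => hn; last first.
    rewrite hNp //= mulr0 nsq0; exact: (sqr_ge0 (B' n)).
  rewrite nsqM nsqC one_lam //; last by apply: leq_trans LNp; exact: ltnW.
  have hb := proj2 (hB n) x.
  have Bn0 := proj1 (hB n).
  have c0 : 0 <= n%:R / L%:R :> R by rewrite divr_ge0 // ler0n.
  have c1 : n%:R / L%:R <= Np%:R / L%:R :> R.
    by rewrite ler_pM2r ?invr_gt0 // ler_nat ltnW.
  have hp0 := nsq_ge0 (p n x).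
  have e1 : (n%:R / L%:R) ^+ 2 * nsq (p n x) <= (Np%:R / L%:R) ^+ 2 * B n ^+ 2.
    apply: (ler_pM (sqr_ge0 _) hp0 _ hb).
    have c2 : 0 <= Np%:R / L%:R :> R by exact: le_trans c1.
    nra.
  apply: le_trans e1 _.
  rewrite -exprMn /B'.
  have : 0 <= Np%:R / L%:R * B n.
    by apply: mulr_ge0; [exact: le_trans c0 c1 | exact: ltW].
  move: (Np%:R / L%:R * B n) => u u0.
  nra.
have h1 := hp.
have h2 := opR_neg (opR_fejer L0 hp).
have h12 := opR_add E3 E3 h1 h2.
have SB'0 : 0 < \sum_(n < Np.+1) B' n.
  by rewrite big_ord_recr /=; apply: ltr_wpDl (sumr_ge0 _ _) (B'0 _) => ? _; exact: ltW.
have E23 : 0 < E / 3 + E / 3 by rewrite addr_gt0.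
have h123 := opR_add E23 SB'0 h12 h3.
exists L; split => //.
apply: (opR_ext (a := fun n x => a n x - p n x + - (((lam R L n)%:C)%C * (a n x - p n x))
    + (p n x - ((lam R L n)%:C)%C * p n x))).
  by move=> n x; ring.
apply: opR_mono h123.
  by rewrite addr_ge0 ?ltW // addr_gt0.
have eS : \sum_(n < Np.+1) B' n = Np%:R / L%:R * SB + E / 6.
  rewrite /B' big_split /= -mulr_sumr sumr_const card_ord /eta.
  congr (_ + _); rewrite -mulr_natr; field.
  by rewrite paddr_eq0 ?ler01 ?ler0n // oner_eq0.
rewrite eS.
have key : Np%:R / L%:R * SB <= E / 6.
  rewrite mulrAC ler_pdivrMr //.
  rewrite ltr_pdivrMr // in Lbig.
  lra.
lra.
Qed.
End Approx.

Section Ord.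
Variables (R : realType) (X : pseudoMetricType R) (phi : X -> X).
Variables (d : Order.disp_t) (O : orderType d) (Xs : O -> set X).

Lemma wf_ind (P : O -> Prop) : well_ordered O ->
  (forall g, (forall b, (b < g)%O -> P b) -> P g) -> forall g, P g.
Proof.
move=> wo IH g; apply: contrapT => nPg.
have [m [nPm hm]] := wo [set x | ~ P x] (ex_intro _ g nPg).
apply: nPm; apply: IH => b bm; apply: contrapT => nPb.
by have := hm b nPb; rewrite leNgt bm.
Qed.

Lemma classify (g : O) : (forall b, ~ (b < g)%O) \/
  (exists b, (b < g)%O /\ forall y, (b < y)%O -> (g <= y)%O) \/ is_limit g.
Proof.
case: (pselect (exists b, (b < g)%O)) => [hex|hno]; last first.
  by left => b bg; apply: hno; exists b.
case: (pselect (exists b, (b < g)%O /\ forall y, (b < y)%O -> (g <= y)%O)) => [hs|hns].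
  by right; left.
right; right; split => // b bg.
apply: contrapT => hn; apply: hns; exists b; split => // y yb.
rewrite leNgt; apply/negP => yg; apply: hn; exists y; split => //.
Qed.

Lemma nw_closed (Y : set X) : closed Y -> closed (nonwandering phi Y).
Proof.
move=> cY y cly; split.
  apply: cY => B nB; have [z [[Yz _] Bz]] := cly B nB; by exists z.
move=> U oU Uy.
have [z [[Yz hz] Uz]] := cly U (open_nbhs_nbhs (conj oU Uy)).
exact: hz.
Qed.

Hypotheses (wo : well_ordered O) (inw : iterated_nw phi Xs).

Lemma Xs_decr : forall g b, (b < g)%O -> Xs g `<=` Xs b.
Proof.
case: inw => [h0 [hs hl]].
apply: (wf_ind (P := fun g => forall b, (b < g)%O -> Xs g `<=` Xs b)) => // g IH.
case: (classify g) => [nob|[[b0 [b0g hb0]]|lim]].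
- by move=> b /nob.
- rewrite (hs b0 g b0g hb0) => b bg x [Xx _].
  case: (ltgtP b b0) => h.
  + exact: (IH b0 b0g b h).
  + by have := hb0 b h; rewrite leNgt bg.
  + by rewrite h.
- case: (lim) => l1 l2.
  by rewrite (hl g l1 l2) => b bg x /(_ b bg).
Qed.

Lemma Xs_closed : forall g, closed (Xs g).
Proof.
case: inw => [h0 [hs hl]].
apply: (wf_ind (P := fun g => closed (Xs g))) => // g IH.
case: (classify g) => [nob|[[b0 [b0g hb0]]|lim]].
- by rewrite (h0 g nob); exact: closedT.
- rewrite (hs b0 g b0g hb0); apply: nw_closed; exact: IH.
- case: (lim) => l1 l2; rewrite (hl g l1 l2); apply: closed_bigI => b bg; exact: IH.
Qed.
End Ord.

Section Trunc.
Variables (R : realType) (X : pseudoMetricType R).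

Definition psi (eps t : R) : R := Num.min 1 (Num.max 0 (2 * t / eps - 1)).

Lemma psi_ge0 eps t : 0 <= psi eps t.
Proof. by rewrite /psi le_min ler01 le_max lexx. Qed.

Lemma psi_le1 eps t : psi eps t <= 1.
Proof. by rewrite /psi ge_min lexx. Qed.

Lemma psi_one eps t : 0 < eps -> eps <= t -> psi eps t = 1.
Proof.
move=> e0 et; rewrite /psi.
have h : 1 <= 2 * t / eps - 1.
  rewrite lerBrDr ler_pdivlMr //; lra.
by rewrite max_r ?min_l //; apply: le_trans h; exact: ler01.
Qed.

Lemma psi_zero eps t : 0 < eps -> t <= eps / 2 -> psi eps t = 0.
Proof.
move=> e0 et; rewrite /psi.
have h : 2 * t / eps - 1 <= 0.
  rewrite subr_le0 ler_pdivrMr //; lra.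
by rewrite max_l // min_r // ler01.
Qed.

Lemma aff_cont (eps : R) : 0 < eps -> continuous (fun t : R => 2 * t / eps - 1 : R^o).
Proof.
move=> e0 t; apply/(cvgrPdist_lt (FF := nbhs_filter t)) => e E0.
apply/nbhs_ballP; exists (e * eps / 2); first by rewrite /= divr_gt0 ?mulr_gt0.
move=> s; rewrite /ball /= => h.
have -> : 2 * t / eps - 1 - (2 * s / eps - 1) = (2 / eps) * (t - s) by field; rewrite gt_eqF.
rewrite normrM ger0_norm; last by rewrite divr_ge0 // ltW.
have key : 2 / eps * (e * eps / 2) = e by field; rewrite gt_eqF.
by rewrite -[X in _ < X]key ltr_pM2l // divr_gt0.
Qed.

Lemma psi_cont (eps : R) : 0 < eps -> continuous (psi eps : R -> R^o).
Proof.
move=> e0 t.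
have hmax := @continuous_max R R (fun _ : R => 0 : R^o) (fun s : R => 2 * s / eps - 1 : R^o) t
   (@cst_continuous R R^o 0 t) (@aff_cont eps e0 t).
exact: (@continuous_min R R (fun _ : R => 1 : R^o)
   (fun s : R => Num.max 0 (2 * s / eps - 1) : R^o) t
   (@cst_continuous R R^o 1 t) hmax).
Qed.

Lemma ReabsM (z : R[i]) (k : R) : 0 <= k ->
  complex.Re `|z * ((k%:C)%C)| = complex.Re `|z| * k.
Proof.
move=> k0; rewrite normrM (ger0_norm (x := (k%:C)%C)) ?ler0c //.
rewrite [X in complex.Re (X * _)]absRe -rmorphM.
by [].
Qed.

Lemma trunc (f : X -> R[i]) (eps : R) : C0 f -> 0 < eps ->
  exists h : X -> R[i], C0 h /\ (forall x, nsq (f x - h x) <= eps ^+ 2) /\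
     (forall x, complex.Re `|f x| <= eps / 2 -> h x = 0).
Proof.
move=> [fc fv] e0.
set g := fun x => complex.Re `|f x|.
have gc : continuous g := gnorm_cont fc.
pose h := fun x => f x * (((psi eps (g x))%:C)%C).
have c2 : continuous (fun x => psi eps (g x) : R^o).
  move=> x; apply: (continuous_comp (f := g) (g := psi eps)); first exact: gc.
  exact: psi_cont.
have c3 : continuous (fun x => ((psi eps (g x))%:C)%C : R[i]).
  move=> x; apply: (continuous_comp (f := fun x => psi eps (g x))); first exact: c2.
  exact: RC_cont.
exists h; split; [split|split].
- move=> x; exact: (continuousM (s := f) (t := fun x => ((psi eps (g x))%:C)%C)
     (@fc x) (@c3 x)).
- move=> e e0'; have [K [cK hK]] := fv e e0'; exists K; split => // x Kx.
  have := hK x Kx; rewrite /h absRe [`|f x * _|]absRe !ltcR ReabsM ?psi_ge0 //.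
  move=> hx; apply: le_lt_trans _ hx; rewrite ler_piMr ?psi_le1 //; exact: Reabs_ge0.
- move=> x; rewrite /h.
  have -> : f x - f x * ((psi eps (g x))%:C)%C = f x * (((1 - psi eps (g x))%:C)%C).
    by rewrite rmorphB /= rmorph1; ring.
  rewrite nsqM nsqC nsq_Re -/(g x).
  have g0 : 0 <= g x := Reabs_ge0 _.
  case: (lerP eps (g x)) => hg.
    by rewrite psi_one // subrr expr0n /= mulr0 sqr_ge0.
  have p0 := psi_ge0 eps (g x); have p1 := psi_le1 eps (g x).
  have : (1 - psi eps (g x)) ^+ 2 <= 1 by nra.
  have : g x ^+ 2 <= eps ^+ 2 by nra.
  move=> h1 h2; have := sqr_ge0 (g x); nra.
- move=> x hx; by rewrite /h psi_zero // mulr0.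
Qed.
End Trunc.

Section Compact.
Variables (R : realType) (X : pseudoMetricType R) (phi : X -> X).
Variables (d : Order.disp_t) (O : orderType d) (Xs : O -> set X).
Hypotheses (wo : well_ordered O) (inw : iterated_nw phi Xs).

Lemma small_on_Xb (f : X -> R[i]) (del : R) (g : O) : C0 f -> 0 < del -> is_limit g ->
  (forall x, Xs g x -> f x = 0) ->
  exists b, (b < g)%O /\ forall x, Xs b x -> complex.Re `|f x| < del.
Proof.
move=> [fc fv] d0 lim fz.
apply: contrapT => hno.
have hb : forall b, (b < g)%O -> exists x, Xs b x /\ del <= complex.Re `|f x|.
  move=> b bg; apply: contrapT => hn; apply: hno; exists b; split => // x Xx.
  rewrite ltNge; apply/negP => hx; apply: hn; by exists x.
set gf := fun x => complex.Re `|f x|.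
have gc : continuous gf := gnorm_cont fc.
set S := [set x | del <= gf x].
have cS : closed S.
  have := (continuous_closedP gf).1 gc [set y : R | del <= y] (@closed_ge R del).
  by [].
have [K [cK hK]] := fv del d0.
have SK : S `<=` K.
  move=> x Sx; apply: contrapT => nK; have := hK x nK.
  rewrite absRe ltcR => h; move: Sx; rewrite /S /= /gf leNgt h //.
have decr := @Xs_decr R X phi d O Xs wo inw.
pose F := filter_from [set b | (b < g)%O] (fun b => Xs b `&` S).
have FF : ProperFilter F.
  apply: filter_from_proper.
    apply: filter_from_filter.
      by case: lim => [[b bg] _]; exists b.
    have sub : forall b1 b2, (b1 <= b2)%O -> Xs b2 `<=` Xs b1.
      move=> b1 b2; rewrite le_eqVlt => /orP [/eqP -> //|h]; exact: decr.
    move=> b1 b2 b1g b2g; case: (leP b1 b2) => h.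
      exists b2 => // x [Xx Sx]; split; split => //; exact: sub h x Xx.
    exists b1 => // x [Xx Sx]; split; split => //; exact: sub (ltW h) x Xx.
  move=> b bg; have [x [Xx hx]] := hb b bg; by exists x.
have [b0 b0g] := proj1 lim.
have FK : F K by exists b0 => // x [_ Sx]; exact: SK.
have [p [Kp clp]] := cK F FF FK.
have inall : forall b, (b < g)%O -> (Xs b `&` S) p.
  move=> b bg.
  have cl : closed (Xs b `&` S) := closedI (@Xs_closed R X phi d O Xs wo inw b) cS.
  apply: cl => B nB; apply: clp nB; by exists b.
have Xgp : Xs g p.
  case: inw => [_ [_ hl]]; case: (lim) => l1 l2; rewrite (hl g l1 l2) => b bg.
  exact: (inall b bg).1.
have := (inall b0 b0g).2; rewrite /S /= /gf fz // normr0 /=.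
by rewrite leNgt d0.
Qed.
End Compact.

Section Main.
Variables (R : realType) (X : pseudoMetricType R).

Lemma C0_scale (k : R) (h : X -> R[i]) : 0 <= k -> k <= 1 -> C0 h ->
  C0 (fun x => ((k%:C)%C) * h x).
Proof.
move=> k0 k1 [hc hv]; split.
  move=> x; exact: (continuousM (s := fun=> ((k%:C)%C : R[i])) (t := h)
     (@cst_continuous X R[i] _ x) (@hc x)).
move=> e e0; have [K [cK hK]] := hv e e0; exists K; split => // x Kx.
have := hK x Kx; rewrite mulrC absRe [`|h x * _|]absRe !ltcR ReabsM //.
move=> hx; apply: le_lt_trans _ hx; rewrite ler_piMr //; exact: Reabs_ge0.
Qed.

Lemma C0_zero : C0 (fun _ : X => 0 : R[i]).
Proof.
split; first by move=> x; exact: (@cst_continuous X R[i] 0 x).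
move=> e e0; exists set0; split; first exact: compact0.
by move=> x _; rewrite normr0 ltcR.
Qed.

Lemma nsq_small (z : R[i]) : (forall e, 0 < e -> nsq z <= e ^+ 2) -> z = 0.
Proof.
move=> H; rewrite nsq_Re in H.
have r0 := Reabs_ge0 z.
case: (ltrP 0 (complex.Re `|z|)) => hr.
  have h := H _ (divr_gt0 hr (ltr0n R 2)); exfalso; nra.
have e0 : complex.Re `|z| = 0 by apply/eqP; rewrite eq_le hr r0.
by apply/eqP; rewrite -normr_eq0 absRe e0.
Qed.

Lemma lam_ge0 L n : 0 <= lam R L n.
Proof. by rewrite /lam divr_ge0 ?ler0n. Qed.

Lemma lam_le1 L n : (0 < L)%N -> lam R L n <= 1.
Proof.
move=> L0; rewrite /lam ler_pdivrMr ?ltr0n // mul1r ler_nat; exact: leq_subr.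
Qed.

Lemma lam_zero L n : (L <= n)%N -> lam R L n = 0.
Proof.
move=> h; rewrite /lam; have -> : (L - n)%N = 0%N by apply/eqP; rewrite subn_eq0.
by rewrite mul0r.
Qed.
End Main.

Unset Implicit Arguments.

Theorem lemma2p4 (R : realType) (X : pseudoMetricType R) (phi : X -> X)
  (d : Order.disp_t) (O : orderType d) (Xs : O -> set X) (g : O) :
  hausdorff_space X -> locally_compact [set: X] -> homeomorphism phi ->
  well_ordered O -> iterated_nw phi Xs ->
  is_limit g -> le_stab Xs g ->
  forall a : coefs X,
    Ideal phi Xs g a <->
    (in_scp phi a /\
     forall e : R, 0 < e -> exists b : O, (b < g)%O /\
       exists c : coefs X, Ideal phi Xs b c /\
         opnorm_le phi (fun n x => a n x - c n x) e).
Proof.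
move=> _ _ _ wo inw lim _ a.
have decr := @Xs_decr R X phi d O Xs wo inw.
have sub : forall b1 b2, (b1 <= b2)%O -> Xs b2 `<=` Xs b1.
  move=> b1 b2; rewrite le_eqVlt => /orP [/eqP -> //|h]; exact: decr.
split; last first.
  move=> [sa happ]; split => //; split.
    apply/funext => x; apply: nsq_small => e e0.
    have [b [bg [c [[_ [c0 _]] hac]]]] := happ e e0.
    have := opR_contr 0%N x (proj1 (opRP _ _ _) hac).
    by rewrite c0 subr0.
  move=> n n0 x Xx; apply: nsq_small => e e0.
  have [b [bg [c [[_ [_ cz]] hac]]]] := happ e e0.
  have := opR_contr n x (proj1 (opRP _ _ _) hac).
  by rewrite cz ?subr0 //; exact: decr bg x Xx.
move=> [sa [a0 az]]; split => // E E0.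
have E2 : 0 < E / 2 by rewrite divr_gt0.
have [L [L0 hL]] := fejer_approx E2 sa.
have aC := proj1 sa.
set eps := E / (2 * (L.+1)%:R).
have eps0 : 0 < eps by rewrite divr_gt0 // mulr_gt0 // ltr0n.
have [hh hhP] := choice (fun n => trunc (aC n) eps0).
have eps2 : 0 < eps / 2 by rewrite divr_gt0.
have hb : forall N, exists b, (b < g)%O /\ forall n, (0 < n < N)%N ->
    forall x, Xs b x -> complex.Re `|a n x| < eps / 2.
  elim=> [|N [b [bg hbN]]].
    have [b0 b0g] := proj1 lim; exists b0; split => // n.
    by rewrite ltn0 andbF.
  case: (posnP N) => [N0|N0].
    exists b; split => // n; rewrite N0 => /andP [h1 h2]; exfalso; lia.
  have [bN [bNg hN]] := small_on_Xb wo inw (aC N) eps2 lim (fun x Xx => az N N0 x Xx).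
  have key : forall b', (b <= b')%O -> (bN <= b')%O -> (b' < g)%O ->
      exists b, (b < g)%O /\ forall n, (0 < n < N.+1)%N ->
      forall x, Xs b x -> complex.Re `|a n x| < eps / 2.
    move=> b' h1 h2 h3; exists b'; split => // n /andP [n0 nN] x Xx.
    case: (ltnP n N) => hn.
      by apply: hbN; [rewrite n0 hn | exact: sub _ _ h1 x Xx].
    have -> : n = N by lia.
    exact: hN x (sub _ _ h2 x Xx).
  case: (leP b bN) => h.
    by apply: (key bN).
  by apply: (key b) => //; exact: ltW.
have [b [bg hbL]] := hb L.
exists b; split => //.
pose c : coefs X := fun n x => if (0 < n < L)%N then ((lam R L n)%:C)%C * hh n x else 0.
have cC : forall n, C0 (c n).
  move=> n; case: (boolP ((0 < n < L)%N)) => h.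
    have -> : c n = (fun x => ((lam R L n)%:C)%C * hh n x) by apply/funext => x; rewrite /c h.
    by apply: C0_scale; [exact: lam_ge0 | exact: lam_le1 | exact: (proj1 (hhP n))].
  have -> : c n = (fun _ => 0) by apply/funext => x; rewrite /c (negbTE h).
  exact: C0_zero.
exists c; split.
  split; last split.
  - split => // e e0; exists c; split.
      split => //; exists L => n nL; apply/funext => x.
      rewrite /c ifF //; apply/negbTE; apply/negP => /andP [_ h].
      by rewrite ltnNge nL in h.
    by apply/opRP; apply: opR_zero => n x; rewrite subrr.
  - by apply/funext => x.
  - move=> n n0 x Xx; rewrite /c; case: ifP => // /andP [_ nL].
    rewrite (proj2 (proj2 (hhP n))) ?mulr0 //; apply: ltW; apply: hbL => //.
    by rewrite n0 nL.
apply/opRP.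
apply: (opR_ext (a := fun n x => (a n x - ((lam R L n)%:C)%C * a n x)
   + (((lam R L n)%:C)%C * a n x - c n x))).
  by move=> n x; ring.
have h2 : opR phi (fun n x => ((lam R L n)%:C)%C * a n x - c n x) (\sum_(n < L.+1) eps).
  apply: (@opR_poly R X phi L (fun=> eps)) => //.
    move=> n x nL; rewrite /c ifF; last first.
      apply/negbTE; apply/negP => /andP [_ h].
      by rewrite ltnNge (ltnW nL) in h.
    by rewrite lam_zero ?(ltnW nL) // rmorph0 mul0r subrr.
  move=> n x; rewrite /c; case: ifP => [/andP [n0 nL]|hn].
    rewrite -mulrBr nsqM nsqC.
    have l0 := lam_ge0 R L n; have l1 := @lam_le1 R L n L0.
    have hx := proj1 (proj2 (hhP n)) x.
    have := nsq_ge0 (a n x - hh n x).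
    have : lam R L n ^+ 2 <= 1 by nra.
    rewrite /=; move: (nsq (a n x - hh n x)) hx => N hx h1 h2.
    nra.
  case: (posnP n) => [->|np].
    by rewrite a0 mulr0 subrr nsq0 sqr_ge0.
  have nL : (L <= n)%N.
    by move: hn; rewrite np /= => /negbT; rewrite -leqNgt.
  by rewrite lam_zero // rmorph0 mul0r subrr nsq0 sqr_ge0.
have S0 : 0 < \sum_(n < L.+1) eps.
  by rewrite sumr_const card_ord; apply: mulrn_wgt0.
have h := opR_add E2 S0 hL h2.
apply: opR_mono h; first by rewrite ltW // addr_gt0.
apply/eqle; rewrite sumr_const card_ord /eps -mulr_natr; field.
by rewrite paddr_eq0 ?ler01 ?ler0n // oner_eq0.
Qed.
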